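(* Let $G$ be a simple undirected graph with infinite chromatic number $\chi(G)$. Then there is a minor $M$ of $G$ such that $M\not\cong G$ and $\chi(M)=\chi(G)$.
   Context: Graphs are simple and undirected: $G=(V,E)$ with $E \subseteq \{\{x,y\}: x,y\in V,\ x\neq y\}$. $\chi(G)$ denotes the chromatic number of $G$, i.e. the least cardinal $\lambda$ such that there is a graph homomorphism $G \to K_\lambda$; $K_\alpha$ is the complete graph on $\alpha$ vertices. Disjoint sets $S,T\subseteq V(G)$ are connected to each other if there are $s\in S$, $t\in T$ with $\{s,t\}\in E(G)$. For a collection $\mathcal D$ of pairwise disjoint, nonempty subsets of $V(G)$, each inducing a connected subgraph, let $G(\mathcal D)$ be the graph with vertex set $\mathcal D$ in which distinct $d,e\in\mathcal D$ are adjacent iff $d$ and $e$ are connected to each other. A graph $M$ is a minor of $G$ if there is such a collection $\mathcal D$ and an injective graph homomorphism $M \to G(\mathcal D)$. *)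

(* Defs.v *)
From Stdlib Require Import Relations Vectors.Fin.

Definition simple_graph (V : Type) (E : V -> V -> Prop) : Prop :=
  (forall x y, E x y -> E y x) /\ (forall x, ~ E x x).

(* Graph homomorphism G -> K_K : a proper colouring with colour set K
   (adjacent vertices of K_K are exactly distinct colours). *)
Definition hom_to_complete (V : Type) (E : V -> V -> Prop) (K : Type) : Prop :=
  exists c : V -> K, forall x y, E x y -> c x <> c y.

Definition chi_infinite (V : Type) (E : V -> V -> Prop) : Prop :=
  forall n : nat, ~ hom_to_complete V E (Fin.t n).

(* chi(G) = chi(M): since chi is the least cardinal lambda with G -> K_lambda,
   the two least cardinals coincide iff the same colour sets work for both. *)
Definition same_chi (V : Type) (E : V -> V -> Prop)
                    (W : Type) (F : W -> W -> Prop) : Prop :=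
  forall K : Type, hom_to_complete V E K <-> hom_to_complete W F K.

Definition induces_connected (V : Type) (E : V -> V -> Prop) (S : V -> Prop) : Prop :=
  forall x y, S x -> S y ->
    clos_refl_trans V (fun a b => S a /\ S b /\ E a b) x y.

Definition sets_connected (V : Type) (E : V -> V -> Prop) (S T : V -> Prop) : Prop :=
  exists s t, S s /\ T t /\ E s t.

(* A collection D of pairwise disjoint, nonempty, connected vertex sets,
   given as an indexed family B : I -> set V (distinct indices = distinct members). *)
Definition branch_collection (V : Type) (E : V -> V -> Prop)
           (I : Type) (B : I -> V -> Prop) : Prop :=
  (forall i, exists v, B i v) /\
  (forall i, induces_connected V E (B i)) /\
  (forall i j, i <> j -> forall v, B i v -> B j v -> False).

Definition contracted_adj (V : Type) (E : V -> V -> Prop)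
           (I : Type) (B : I -> V -> Prop) (i j : I) : Prop :=
  i <> j /\ sets_connected V E (B i) (B j).

Definition is_minor (W : Type) (F : W -> W -> Prop)
                    (V : Type) (E : V -> V -> Prop) : Prop :=
  exists (I : Type) (B : I -> V -> Prop) (phi : W -> I),
    branch_collection V E I B /\
    (forall a b, phi a = phi b -> a = b) /\
    (forall a b, F a b -> contracted_adj V E I B (phi a) (phi b)).

Definition graph_iso (W : Type) (F : W -> W -> Prop)
                     (V : Type) (E : V -> V -> Prop) : Prop :=
  exists h : W -> V,
    (forall a b, h a = h b -> a = b) /\
    (forall v, exists a, h a = v) /\
    (forall a b, F a b <-> E (h a) (h b)).

(* Main.v *)
Require Import Defs.
From Stdlib Require Import ClassicalEpsilon Classical List Relations Vectors.Fin ProofIrrelevance.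

Lemma fin_inj (K : Type) (l : list K) :
  exists f : K -> Fin.t (S (length l)),
    forall k k', In k l -> In k' l -> f k = f k' -> k = k'.
Proof.
  induction l as [|a l IH].
  - exists (fun _ => Fin.F1). intros k k' [].
  - destruct IH as [f Hf].
    exists (fun k => if excluded_middle_informative (k = a) then Fin.F1 else Fin.FS (f k)).
    intros k k' Hk Hk' Heq.
    destruct (excluded_middle_informative (k = a)) as [e|e];
    destruct (excluded_middle_informative (k' = a)) as [e'|e'];
      try congruence.
    apply Fin.FS_inj in Heq.
    destruct Hk as [Hk|Hk]; [congruence|].
    destruct Hk' as [Hk'|Hk']; [congruence|].
    auto.
Qed.

Lemma shift_lemma (V : Type) (E : V -> V -> Prop) (HG : simple_graph V E)
  (Hchi : chi_infinite V E) (v : V) (K : Type) (c : V -> K)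
  (Hc : forall x y, E x y -> x <> v -> y <> v -> c x <> c y) :
  hom_to_complete V E K.
Proof.
  destruct HG as [Hsym Hirr].
  assert (A : forall l : list K, exists k, ~ In k l).
  { intro l. apply NNPP. intro Hn.
    assert (Hall : forall k, In k l).
    { intro k. apply NNPP. intro Hk. apply Hn. exists k. exact Hk. }
    destruct (fin_inj K l) as [f Hf].
    apply (Hchi (S (S (length l)))).
    exists (fun u => if excluded_middle_informative (u = v) then Fin.F1
                     else Fin.FS (f (c u))).
    intros x y Hxy.
    destruct (excluded_middle_informative (x = v)) as [e|e];
    destruct (excluded_middle_informative (y = v)) as [e'|e'].
    - subst. exfalso. exact (Hirr v Hxy).
    - intro H. discriminate.
    - intro H. discriminate.
    - intro H. apply Fin.FS_inj in H. apply Hf in H; auto.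
      exact (Hc x y Hxy e e' H). }
  assert (pick : forall l : list K, {k | ~ In k l}).
  { intro l. apply constructive_indefinite_description. apply A. }
  set (gl := fix gl (n : nat) : list K :=
         match n with 0 => nil | S m => proj1_sig (pick (gl m)) :: gl m end).
  set (g := fun n => proj1_sig (pick (gl n))).
  assert (Hnot : forall n, ~ In (g n) (gl n)).
  { intro n. unfold g. exact (proj2_sig (pick (gl n))). }
  assert (Hin : forall m n, m < n -> In (g m) (gl n)).
  { intros m n Hmn. induction Hmn.
    - simpl. left. reflexivity.
    - simpl. right. exact IHHmn. }
  assert (ginj : forall m n, g m = g n -> m = n).
  { intros m n H. destruct (PeanoNat.Nat.lt_trichotomy m n) as [h|[h|h]]; auto.
    - exfalso. apply (Hnot n). rewrite <- H. apply Hin. exact h.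
    - exfalso. apply (Hnot m). rewrite H. apply Hin. exact h. }
  set (sh := fun k : K =>
      match excluded_middle_informative (exists n, k = g n) with
      | left H => g (S (proj1_sig (constructive_indefinite_description _ H)))
      | right _ => k end).
  assert (sh0 : forall k, sh k <> g 0).
  { intro k. unfold sh.
    destruct (excluded_middle_informative (exists n, k = g n)) as [H|H].
    - intro E0. apply ginj in E0. discriminate.
    - intro E0. apply H. exists 0. exact E0. }
  assert (shinj : forall k k', sh k = sh k' -> k = k').
  { intros k k'. unfold sh.
    destruct (excluded_middle_informative (exists n, k = g n)) as [H|H];
    destruct (excluded_middle_informative (exists n, k' = g n)) as [H'|H'].
    - destruct (constructive_indefinite_description _ H) as [n Hn].
      destruct (constructive_indefinite_description _ H') as [n' Hn']. simpl.
      intro E0. apply ginj in E0. injection E0 as E0. subst. reflexivity.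
    - destruct (constructive_indefinite_description _ H) as [n Hn]. simpl.
      intro E0. exfalso. apply H'. exists (S n). symmetry. exact E0.
    - destruct (constructive_indefinite_description _ H') as [n Hn]. simpl.
      intro E0. exfalso. apply H. exists (S n). exact E0.
    - auto. }
  exists (fun u => if excluded_middle_informative (u = v) then g 0 else sh (c u)).
  intros x y Hxy.
  destruct (excluded_middle_informative (x = v)) as [e|e];
  destruct (excluded_middle_informative (y = v)) as [e'|e'].
  - subst. exfalso. exact (Hirr v Hxy).
  - intro H. symmetry in H. exact (sh0 _ H).
  - intro H. exact (sh0 _ H).
  - intro H. apply shinj in H. exact (Hc x y Hxy e e' H).
Qed.

Lemma singleton_branch (V : Type) (E : V -> V -> Prop) :
  branch_collection V E V (fun i x => x = i).
Proof.
  split; [|split].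
  - intro i. exists i. reflexivity.
  - intros i x y Hx Hy. subst. apply rt_refl.
  - intros i j Hij w H1 H2. subst. auto.
Qed.

Theorem proposition2 (V : Type) (E : V -> V -> Prop)
  (HG : simple_graph V E) (Hchi : chi_infinite V E) :
  exists (W : Type) (F : W -> W -> Prop),
    simple_graph W F /\ is_minor W F V E /\ ~ graph_iso W F V E /\
    same_chi W F V E.
Proof.
  pose proof HG as [Hsym Hirr].
  assert (Hedge : exists x y, E x y).
  { apply NNPP. intro Hn. apply (Hchi 1).
    exists (fun _ => Fin.F1). intros x y Hxy. exfalso. apply Hn. eauto. }
  destruct (classic (exists u, forall y, ~ E u y)) as [[u Hu]|Hno].
  - (* G has an isolated vertex: remove all isolated vertices *)
    set (W := {x : V | exists y, E x y}).
    exists W, (fun a b => E (proj1_sig a) (proj1_sig b)).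
    split; [|split; [|split]].
    + split; intros; auto.
    + exists V, (fun i x => x = i), (@proj1_sig _ _).
      split; [apply singleton_branch|split].
      * intros [a Ha] [b Hb] H. simpl in H. subst. f_equal. apply proof_irrelevance.
      * intros a b Hab. split.
        -- intro H. rewrite H in Hab. exact (Hirr _ Hab).
        -- exists (proj1_sig a), (proj1_sig b). auto.
    + intros [h [hinj [hsurj hE]]].
      destruct (hsurj u) as [[a [y Hay]] Ha].
      assert (Hy : exists z, E y z) by (exists a; auto).
      apply (Hu (h (exist _ y Hy))). rewrite <- Ha.
      apply hE. simpl. exact Hay.
    + intro K. split.
      * intros [c Hc].
        destruct Hedge as [x0 [y0 H0]].
        pose (k0 := c (exist _ x0 (ex_intro _ y0 H0))).
        exists (fun x => match excluded_middle_informative (exists y, E x y) with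
                         | left H => c (exist _ x H) | right _ => k0 end).
        intros x y Hxy.
        destruct (excluded_middle_informative (exists z, E x z)) as [H1|H1];
        destruct (excluded_middle_informative (exists z, E y z)) as [H2|H2].
        -- apply (Hc (exist _ x H1) (exist _ y H2)). exact Hxy.
        -- exfalso. apply H2. eauto.
        -- exfalso. apply H1. eauto.
        -- exfalso. apply H1. eauto.
      * intros [c Hc]. exists (fun a => c (proj1_sig a)). intros a b H. apply Hc. exact H.
  - (* no isolated vertex: isolate one vertex *)
    destruct Hedge as [v [w Hvw]].
    exists V, (fun x y => E x y /\ x <> v /\ y <> v).
    split; [|split; [|split]].
    + split.
      * intros x y [H1 [H2 H3]]. auto.
      * intros x [H _]. exact (Hirr x H).
    + exists V, (fun i x => x = i), (fun a => a).
      split; [apply singleton_branch|split].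
      * auto.
      * intros a b [Hab _]. split.
        -- intro H. rewrite H in Hab. exact (Hirr _ Hab).
        -- exists a, b. auto.
    + intros [h [hinj [hsurj hE]]].
      apply Hno. apply NNPP. intro Hn. apply Hn.
      exists (h v). intros y Hy.
      destruct (hsurj y) as [b Hb]. subst y.
      apply hE in Hy. destruct Hy as [_ [H _]]. auto.
    + intro K. split.
      * intros [c Hc]. apply (shift_lemma V E HG Hchi v K c).
        intros x y Hxy Hx Hy. apply Hc. auto.
      * intros [c Hc]. exists c. intros x y [H _]. auto.
Qed.
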